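(* Every formula $\varphi\in\mathcal{L}_\mu$ is equivalent, over the class of path-finite $\mathsf{wK4}$ models (in particular over all finite $\mathsf{wK4}$ models), to a bisimulation-invariant first-order formula $\theta(y)$ in the signature consisting of the binary relation $\sqsubset$ and one unary predicate for each propositional constant; i.e. for every such model $M$ and $w\in M$, $w\in\|\varphi\|_M$ iff $M\models\theta[w]$.
   Context: A Kripke model is $M=\langle M,\sqsubset,\|\cdot\|\rangle$; $\sqsubseteq$ is the reflexive closure of $\sqsubset$. $\mathsf{wK4}$: for all $a\neq c$, $a\sqsubset b\sqsubset c$ implies $a\sqsubset c$. Write $u\prec v$ iff $u\sqsubset v$ and not $v\sqsubset u$. The model is path-finite if $\prec$ is conversely well-founded (there is no infinite sequence $u_0\prec u_1\prec u_2\prec\cdots$). $\mathcal{L}_\mu$ (negation normal form): $\varphi::=\top\mid x\mid p\mid\neg p\mid\varphi\wedge\varphi\mid\varphi\vee\varphi\mid\Diamond\varphi\mid\Box\varphi\mid\nu x.\varphi\mid\mu x.\varphi$, with standard Kripke semantics ($\Diamond$/$\Box$ over $\sqsubset$-successors, $\mu,\nu$ least/greatest fixed points). A bisimulation between models $M,N$ (for a set $P$ of constants) is a relation $\iota\subseteq M\times N$ such that related points agree on all $p\in P$, and the forth and back conditions hold for $\sqsubset$. A first-order formula $\theta(y)$ is bisimulation invariant if whenever $(u,v)$ lies in a bisimulation, $M\models\theta[u]$ iff $N\models\theta[v]$. *)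

(* Defs.v *)
From Stdlib Require Import Arith List.

Record model : Type := Model {
  carrier :> Type;
  rel : carrier -> carrier -> Prop;
  val : nat -> carrier -> Prop
}.

Definition wK4 (M : model) : Prop :=
  forall a b c : M, a <> c -> rel M a b -> rel M b c -> rel M a c.

Definition sprec (M : model) (u v : M) : Prop := rel M u v /\ ~ rel M v u.

Definition path_finite (M : model) : Prop :=
  ~ exists u : nat -> M, forall n, sprec M (u n) (u (S n)).

Inductive muform : Type :=
| MTop : muform
| MVar : nat -> muform
| MProp : nat -> muform
| MNProp : nat -> muform
| MAnd : muform -> muform -> muform
| MOr : muform -> muform -> muform
| MDia : muform -> muform
| MBox : muform -> muform
| MNu : nat -> muform -> muform
| MMu : nat -> muform -> muform.

Definition upd_set {W : Type} (rho : nat -> W -> Prop) (x : nat) (S : W -> Prop)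
  : nat -> W -> Prop := fun y => if Nat.eqb y x then S else rho y.

(** Semantics; μ and ν are the Knaster–Tarski least / greatest fixed points
    (intersection of prefixed points / union of postfixed points). *)
Fixpoint mu_sem (M : model) (rho : nat -> M -> Prop) (phi : muform) : M -> Prop :=
  match phi with
  | MTop => fun _ => True
  | MVar x => rho x
  | MProp p => val M p
  | MNProp p => fun w => ~ val M p w
  | MAnd a b => fun w => mu_sem M rho a w /\ mu_sem M rho b w
  | MOr a b => fun w => mu_sem M rho a w \/ mu_sem M rho b w
  | MDia a => fun w => exists v, rel M w v /\ mu_sem M rho a v
  | MBox a => fun w => forall v, rel M w v -> mu_sem M rho a v
  | MNu x a => fun w => exists S : M -> Prop,
        (forall u, S u -> mu_sem M (upd_set rho x S) a u) /\ S w
  | MMu x a => fun w => forall S : M -> Prop,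
        (forall u, mu_sem M (upd_set rho x S) a u -> S u) -> S w
  end.

Fixpoint mu_free (x : nat) (phi : muform) : Prop :=
  match phi with
  | MTop | MProp _ | MNProp _ => False
  | MVar y => y = x
  | MAnd a b | MOr a b => mu_free x a \/ mu_free x b
  | MDia a | MBox a => mu_free x a
  | MNu y a | MMu y a => y <> x /\ mu_free x a
  end.

Definition mu_closed (phi : muform) : Prop := forall x, ~ mu_free x phi.

(** truth set ‖φ‖_M of a closed formula (the assignment is irrelevant) *)
Definition truth_set (M : model) (phi : muform) : M -> Prop :=
  mu_sem M (fun _ _ => False) phi.

Inductive foform : Type :=
| FTrue : foform
| FRel : nat -> nat -> foform
| FEq : nat -> nat -> foform
| FPred : nat -> nat -> foform
| FNot : foform -> foform
| FAnd : foform -> foform -> foform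
| FOr : foform -> foform -> foform
| FImp : foform -> foform -> foform
| FEx : nat -> foform -> foform
| FAll : nat -> foform -> foform.

Definition upd_env {W : Type} (e : nat -> W) (i : nat) (w : W) : nat -> W :=
  fun j => if Nat.eqb j i then w else e j.

Fixpoint fo_sat (M : model) (e : nat -> M) (f : foform) : Prop :=
  match f with
  | FTrue => True
  | FRel i j => rel M (e i) (e j)
  | FEq i j => e i = e j
  | FPred p i => val M p (e i)
  | FNot a => ~ fo_sat M e a
  | FAnd a b => fo_sat M e a /\ fo_sat M e b
  | FOr a b => fo_sat M e a \/ fo_sat M e b
  | FImp a b => fo_sat M e a -> fo_sat M e b
  | FEx i a => exists w : M, fo_sat M (upd_env e i w) a
  | FAll i a => forall w : M, fo_sat M (upd_env e i w) a
  end.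

Fixpoint fo_free (i : nat) (f : foform) : Prop :=
  match f with
  | FTrue => False
  | FRel j k | FEq j k => j = i \/ k = i
  | FPred _ j => j = i
  | FNot a => fo_free i a
  | FAnd a b | FOr a b | FImp a b => fo_free i a \/ fo_free i b
  | FEx j a | FAll j a => j <> i /\ fo_free i a
  end.

Definition fo_in_one_var (y : nat) (f : foform) : Prop :=
  forall i, fo_free i f -> i = y.

Definition fo_holds_at (M : model) (f : foform) (y : nat) (w : M) : Prop :=
  fo_sat M (fun _ => w) f.

Definition bisimulation (M N : model) (Z : M -> N -> Prop) : Prop :=
  (forall u v, Z u v -> forall p, val M p u <-> val N p v) /\
  (forall u v, Z u v -> forall u', rel M u u' -> exists v', rel N v v' /\ Z u' v') /\
  (forall u v, Z u v -> forall v', rel N v v' -> exists u', rel M u u' /\ Z u' v').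

Definition bisim_invariant_on (C : model -> Prop) (f : foform) (y : nat) : Prop :=
  forall (M N : model) (Z : M -> N -> Prop), C M -> C N -> bisimulation M N Z ->
    forall u v, Z u v -> (fo_holds_at M f y u <-> fo_holds_at N f y v).

Definition pf_wK4 (M : model) : Prop := path_finite M /\ wK4 M.

(* Main.v *)
Require Import Defs.
From Stdlib Require Import List Arith Lia Bool Classical ClassicalEpsilon.
Import ListNotations.

Lemma upd_set_eq {W} (r : nat -> W -> Prop) x S : upd_set r x S x = S.
Proof. unfold upd_set. now rewrite Nat.eqb_refl. Qed.

Definition upcl (M : model) (U : M -> Prop) := forall u v, U u -> rel M u v -> U v.

Lemma mono : forall psi (M : model) (U : M -> Prop), upcl M U ->
  forall r r' : nat -> M -> Prop, (forall x v, U v -> r x v -> r' x v) ->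
  forall v, U v -> mu_sem M r psi v -> mu_sem M r' psi v.
Proof.
  induction psi; intros M U HU r r' Hr v Uv H; simpl in *; eauto.
  - destruct H; split; eauto.
  - destruct H; [left|right]; eauto.
  - destruct H as [u [Hu Hs]]. exists u; split; eauto.
  - destruct H as [S [HS Sv]]. exists (fun u => S u /\ U u). split; [|auto].
    intros u [Su Uu]. apply (IHpsi M U HU (upd_set r n S)); auto.
    intros x w Uw. unfold upd_set. destruct (Nat.eqb x n); auto.
  - intros S HS. apply (H (fun u => U u -> S u)); auto.
    intros u Hu Uu. apply HS. revert Hu. apply (IHpsi M U HU); auto.
    intros x w Uw. unfold upd_set. destruct (Nat.eqb x n); auto.
Qed.

Lemma mono_all : forall psi (M : model) (r r' : nat -> M -> Prop),
  (forall x v, r x v -> r' x v) -> forall v, mu_sem M r psi v -> mu_sem M r' psi v.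
Proof. intros psi M r r' H v. apply (mono psi M (fun _ => True)); auto. intros ? ? ? ?; auto. Qed.

Lemma nu_post : forall (M : model) r x a v, mu_sem M r (MNu x a) v ->
  mu_sem M (upd_set r x (mu_sem M r (MNu x a))) a v.
Proof.
  intros M r x a v H. pose proof H as H'. destruct H as [S [HS Sv]].
  eapply mono_all with (r := upd_set r x S); [|auto].
  intros y w. unfold upd_set. destruct (Nat.eqb y x); auto.
  intros Sw. simpl. exists S; auto.
Qed.

Lemma mu_pre : forall (M : model) r x a v,
  mu_sem M (upd_set r x (mu_sem M r (MMu x a))) a v -> mu_sem M r (MMu x a) v.
Proof.
  intros M r x a v H S HS. apply HS.
  eapply mono_all; [|exact H].
  intros y w. unfold upd_set. destruct (Nat.eqb y x); auto.
  intros Hw. apply Hw. exact HS.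
Qed.

Fixpoint props (phi : muform) : list nat :=
  match phi with
  | MProp p | MNProp p => [p]
  | MAnd a b | MOr a b => props a ++ props b
  | MDia a | MBox a | MNu _ a | MMu _ a => props a
  | _ => []
  end.

Fixpoint tyeq (M1 M2 : model) (s1 : nat -> M1 -> Prop) (s2 : nat -> M2 -> Prop)
  (psi : muform) (v1 : M1) (v2 : M2) : Prop :=
  (mu_sem M1 s1 psi v1 <-> mu_sem M2 s2 psi v2) /\
  match psi with
  | MAnd a b | MOr a b => tyeq M1 M2 s1 s2 a v1 v2 /\ tyeq M1 M2 s1 s2 b v1 v2
  | MDia a | MBox a => tyeq M1 M2 s1 s2 a v1 v2
  | MNu x a | MMu x a => tyeq M1 M2 (upd_set s1 x (mu_sem M1 s1 psi))
                           (upd_set s2 x (mu_sem M2 s2 psi)) a v1 v2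
  | _ => True
  end.

Lemma tyeq_head M1 M2 s1 s2 psi v1 v2 : tyeq M1 M2 s1 s2 psi v1 v2 ->
  (mu_sem M1 s1 psi v1 <-> mu_sem M2 s2 psi v2).
Proof. destruct psi; simpl; tauto. Qed.

Lemma tyeq_sym : forall psi M1 M2 s1 s2 v1 v2, tyeq M1 M2 s1 s2 psi v1 v2 ->
  tyeq M2 M1 s2 s1 psi v2 v1.
Proof.
  induction psi; intros; simpl in *; intuition.
Qed.

Definition TcondR (M1 M2 : model) (A1 : M1 -> Prop) (A2 : M2 -> Prop) (R : M1 -> M2 -> Prop) :=
  (forall v1, A1 v1 -> exists v2, A2 v2 /\ R v1 v2) /\
  (forall v2, A2 v2 -> exists v1, A1 v1 /\ R v1 v2).

Lemma TcondR_weak (M1 M2 : model) A1 A2 (R R' : M1 -> M2 -> Prop) :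
  (forall a b, R a b -> R' a b) -> TcondR M1 M2 A1 A2 R -> TcondR M1 M2 A1 A2 R'.
Proof. intros H [H1 H2]; split; intros v Hv; [destruct (H1 v Hv)|destruct (H2 v Hv)]; firstorder. Qed.

Definition relbis (M1 M2 : model) (Z : M1 -> M2 -> Prop) (A1 : M1 -> Prop) (A2 : M2 -> Prop)
  (P : list nat) : Prop :=
  (forall c1 c2, Z c1 c2 -> forall p, In p P -> (val M1 p c1 <-> val M2 p c2)) /\
  (forall c1 c2 v1, Z c1 c2 -> rel M1 c1 v1 -> A1 v1 \/ exists v2, rel M2 c2 v2 /\ Z v1 v2) /\
  (forall c1 c2 v2, Z c1 c2 -> rel M2 c2 v2 -> A2 v2 \/ exists v1, rel M1 c1 v1 /\ Z v1 v2) /\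
  (forall c1 c2 v1, Z c1 c2 -> A1 v1 -> rel M1 c1 v1) /\
  (forall c1 c2 v2, Z c1 c2 -> A2 v2 -> rel M2 c2 v2) /\
  upcl M1 A1 /\ upcl M2 A2.

Lemma relbis_sym M1 M2 Z A1 A2 P : relbis M1 M2 Z A1 A2 P ->
  relbis M2 M1 (fun a b => Z b a) A2 A1 P.
Proof.
  intros (H1 & H2 & H3 & H4 & H5 & H6 & H7).
  split; [|split; [|split; [|split; [|split; [|split]]]]]; auto.
  - intros. symmetry; eauto.
  - intros c1 c2 v1 Hz Hr. destruct (H3 _ _ _ Hz Hr) as [|[u [? ?]]]; eauto.
  - intros c1 c2 v1 Hz Hr. destruct (H2 _ _ _ Hz Hr) as [|[u [? ?]]]; eauto.
  - eauto.
  - eauto.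
Qed.

Lemma Ldir : forall M1 M2 Z A1 A2 P, relbis M1 M2 Z A1 A2 P ->
  forall psi, incl (props psi) P ->
  forall s1 s2, TcondR M1 M2 A1 A2 (tyeq M1 M2 s1 s2 psi) ->
  forall r1 r2, (forall x v, A1 v -> r1 x v -> s1 x v) ->
  (forall x v, A2 v -> s2 x v -> r2 x v) ->
  (forall x c1 c2, Z c1 c2 -> r1 x c1 -> r2 x c2) ->
  forall c1 c2, Z c1 c2 -> mu_sem M1 r1 psi c1 -> mu_sem M2 r2 psi c2.
Proof.
  intros M1 M2 Z A1 A2 P HB. pose proof HB as (Hv & Hf & Hb & HA1 & HA2 & HU1 & HU2).
  induction psi; intros Hp s1 s2 HT r1 r2 Hr1 Hr2 Hz c1 c2 Hc H; simpl in *; eauto.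
  - apply (Hv _ _ Hc); auto. apply Hp; simpl; auto.
  - intro N; apply H. apply (Hv _ _ Hc); auto. apply Hp; simpl; auto.
  - destruct H as [Ha Hb']. split.
    + eapply IHpsi1; eauto. intros q Hq; apply Hp, in_or_app; auto.
      eapply TcondR_weak; [|exact HT]. intros a b Hab; apply Hab.
    + eapply IHpsi2; eauto. intros q Hq; apply Hp, in_or_app; auto.
      eapply TcondR_weak; [|exact HT]. intros a b Hab; apply Hab.
  - destruct H as [Ha|Hb'].
    + left. eapply IHpsi1; eauto. intros q Hq; apply Hp, in_or_app; auto.
      eapply TcondR_weak; [|exact HT]. intros a b Hab; apply Hab.
    + right. eapply IHpsi2; eauto. intros q Hq; apply Hp, in_or_app; auto.
      eapply TcondR_weak; [|exact HT]. intros a b Hab; apply Hab.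
  - destruct H as [v1 [Hr Hs]].
    destruct (Hf _ _ _ Hc Hr) as [HA|[v2 [Hrl Hz2]]].
    + destruct HT as [HT _]. destruct (HT v1 HA) as [v2 [HA' Hty]].
      exists v2. split; [eapply HA2; eauto|].
      simpl in Hty. destruct Hty as [_ Hty]. apply tyeq_head in Hty.
      eapply mono; [exact HU2|exact Hr2|exact HA'|]. apply Hty.
      eapply mono; [exact HU1|exact Hr1|exact HA|exact Hs].
    + exists v2; split; auto. eapply IHpsi; eauto.
      eapply TcondR_weak; [|exact HT]. intros a b Hab; apply Hab.
  - intros v2 Hr.
    destruct (Hb _ _ _ Hc Hr) as [HA|[v1 [Hr1' Hz1]]].
    + destruct HT as [_ HT]. destruct (HT v2 HA) as [v1 [HA' Hty]].
      simpl in Hty. destruct Hty as [_ Hty]. apply tyeq_head in Hty.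
      eapply mono; [exact HU2|exact Hr2|exact HA|]. apply Hty.
      eapply mono; [exact HU1|exact Hr1|exact HA'|]. apply H. eapply HA1; eauto.
    + eapply IHpsi; eauto.
      eapply TcondR_weak; [|exact HT]. intros a b Hab; apply Hab.
  -
    set (G1 := mu_sem M1 r1 (MNu n psi)).
    assert (HG1 : G1 c1) by exact H.
    set (S2 := fun u2 => (exists u1, Z u1 u2 /\ G1 u1) \/ (A2 u2 /\ mu_sem M2 s2 (MNu n psi) u2)).
    exists S2.
    split; [|left; exists c1; auto].
    intros u2 [[u1 [Hzu Hg]]|[Ha Hn]].
    + apply nu_post in Hg.
      refine (IHpsi Hp (upd_set s1 n (mu_sem M1 s1 (MNu n psi)))
                        (upd_set s2 n (mu_sem M2 s2 (MNu n psi))) _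
                        (upd_set r1 n G1) (upd_set r2 n S2) _ _ _ u1 u2 Hzu Hg).
      * eapply TcondR_weak; [|exact HT]. intros a b Hab; apply Hab.
      * intros x v Hav. unfold upd_set. destruct (Nat.eqb x n); auto.
        intro Hg'. eapply mono; [exact HU1|exact Hr1|exact Hav|exact Hg'].
      * intros x v Hav. unfold upd_set. destruct (Nat.eqb x n); auto.
        intro Hn'. right. auto.
      * intros x a1 a2 Hza. unfold upd_set. destruct (Nat.eqb x n); eauto.
        intro Hg'. left. exists a1. auto.
    + apply nu_post in Hn.
      eapply mono; [exact HU2| |exact Ha|exact Hn].
      intros x v Hav. unfold upd_set. destruct (Nat.eqb x n); auto.
      intro Hn'. right. auto.
  -
    intros S2 HS2.
    set (G2 := mu_sem M2 r2 (MMu n psi)).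
    assert (HG2S : forall u, G2 u -> S2 u) by (intros u Hu; apply Hu; exact HS2).
    apply HG2S.
    set (S1 := fun u1 => (forall u2, Z u1 u2 -> G2 u2) /\ (A1 u1 -> mu_sem M1 s1 (MMu n psi) u1)).
    assert (HS1 : S1 c1).
    { apply H. intros u1 Hu1. split.
      - intros u2 Hzu. apply mu_pre.
        refine (IHpsi Hp (upd_set s1 n (mu_sem M1 s1 (MMu n psi)))
                          (upd_set s2 n (mu_sem M2 s2 (MMu n psi))) _
                          (upd_set r1 n S1) (upd_set r2 n G2) _ _ _ u1 u2 Hzu Hu1).
        + eapply TcondR_weak; [|exact HT]. intros a b Hab; apply Hab.
        + intros x v Hav. unfold upd_set. destruct (Nat.eqb x n); auto.
          intros [_ Hs]. auto.
        + intros x v Hav. unfold upd_set. destruct (Nat.eqb x n); auto.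
          intro Hs. eapply mono; [exact HU2|exact Hr2|exact Hav|exact Hs].
        + intros x a1 a2 Hza. unfold upd_set. destruct (Nat.eqb x n); eauto.
          intros [Hs _]. auto.
      - intros Ha. apply mu_pre.
        eapply mono; [exact HU1| |exact Ha|exact Hu1].
        intros x v Hav. unfold upd_set. destruct (Nat.eqb x n); auto.
        intros [_ Hs]. auto. }
    apply HS1. exact Hc.
Qed.

Lemma TcondR_sym (M1 M2 : model) A1 A2 s1 s2 psi :
  TcondR M1 M2 A1 A2 (tyeq M1 M2 s1 s2 psi) ->
  TcondR M2 M1 A2 A1 (fun a b => tyeq M2 M1 s2 s1 psi a b).
Proof.
  intros [H1 H2]; split.
  - intros v Hv. destruct (H2 v Hv) as [u [Hu Ht]]. exists u; split; auto. apply tyeq_sym; auto.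
  - intros v Hv. destruct (H1 v Hv) as [u [Hu Ht]]. exists u; split; auto. apply tyeq_sym; auto.
Qed.

Lemma Lhead : forall M1 M2 Z A1 A2 P, relbis M1 M2 Z A1 A2 P ->
  forall psi, incl (props psi) P ->
  forall s1 s2, TcondR M1 M2 A1 A2 (tyeq M1 M2 s1 s2 psi) ->
  (forall x c1 c2, Z c1 c2 -> (s1 x c1 <-> s2 x c2)) ->
  forall c1 c2, Z c1 c2 -> (mu_sem M1 s1 psi c1 <-> mu_sem M2 s2 psi c2).
Proof.
  intros M1 M2 Z A1 A2 P HB psi Hp s1 s2 HT Hz c1 c2 Hc. split.
  - apply (Ldir M1 M2 Z A1 A2 P HB psi Hp s1 s2 HT); auto.
    intros x a b Hab. apply Hz; auto.
  - apply (Ldir M2 M1 (fun a b => Z b a) A2 A1 P (relbis_sym _ _ _ _ _ _ HB) psi Hp s2 s1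
             (TcondR_sym _ _ _ _ _ _ _ HT)); auto.
    intros x a b Hab. apply Hz; auto.
Qed.

Lemma Ltype : forall M1 M2 Z A1 A2 P, relbis M1 M2 Z A1 A2 P ->
  forall psi, incl (props psi) P ->
  forall s1 s2, TcondR M1 M2 A1 A2 (tyeq M1 M2 s1 s2 psi) ->
  (forall x c1 c2, Z c1 c2 -> (s1 x c1 <-> s2 x c2)) ->
  forall c1 c2, Z c1 c2 -> tyeq M1 M2 s1 s2 psi c1 c2.
Proof.
  intros M1 M2 Z A1 A2 P HB.
  induction psi; intros Hp s1 s2 HT Hz c1 c2 Hc;
    (split; [eapply Lhead; eauto|]); simpl; auto.
  - split; [apply IHpsi1|apply IHpsi2]; auto;
    try (intros q Hq; apply Hp; simpl; apply in_or_app; auto);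
    (eapply TcondR_weak; [|exact HT]; intros a b Hab; apply Hab).
  - split; [apply IHpsi1|apply IHpsi2]; auto;
    try (intros q Hq; apply Hp; simpl; apply in_or_app; auto);
    (eapply TcondR_weak; [|exact HT]; intros a b Hab; apply Hab).
  - apply IHpsi; auto. eapply TcondR_weak; [|exact HT]; intros a b Hab; apply Hab.
  - apply IHpsi; auto. eapply TcondR_weak; [|exact HT]; intros a b Hab; apply Hab.
  - apply IHpsi; auto. eapply TcondR_weak; [|exact HT]; intros a b Hab; apply Hab.
    intros x a b Hab. unfold upd_set. destruct (Nat.eqb x n); auto.
    exact (Lhead M1 M2 Z A1 A2 P HB (MNu n psi) Hp s1 s2 HT Hz a b Hab).
  - apply IHpsi; auto. eapply TcondR_weak; [|exact HT]; intros a b Hab; apply Hab.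
    intros x a b Hab. unfold upd_set. destruct (Nat.eqb x n); auto.
    exact (Lhead M1 M2 Z A1 A2 P HB (MMu n psi) Hp s1 s2 HT Hz a b Hab).
Qed.

Lemma bisim_relbis M N Z P : bisimulation M N Z ->
  relbis M N Z (fun _ => False) (fun _ => False) P.
Proof.
  intros (H1 & H2 & H3).
  split; [|split; [|split; [|split; [|split; [|split]]]]]; try (intros; tauto).
  - intros; eauto.
  - intros c1 c2 v1 Hz Hr. right. eauto.
  - intros c1 c2 v1 Hz Hr. right. destruct (H3 _ _ Hz _ Hr) as [u [? ?]]. eauto.
  - intros u v []. 
  - intros u v [].
Qed.

Lemma mu_bisim_inv : forall phi M N Z, bisimulation M N Z -> forall u v, Z u v ->
  (truth_set M phi u <-> truth_set N phi v).
Proof.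
  intros phi M N Z HB u v Huv. unfold truth_set.
  eapply (Lhead M N Z _ _ (props phi) (bisim_relbis M N Z (props phi) HB) phi); auto.
  - intros q Hq; auto.
  - split; intros ? [].
  - intros; tauto.
Qed.

Fixpoint tp (M : model) (r : nat -> M -> Prop) (psi : muform) (v : M) : list Prop :=
  mu_sem M r psi v ::
  match psi with
  | MAnd a b | MOr a b => tp M r a v ++ tp M r b v
  | MDia a | MBox a => tp M r a v
  | MNu x a | MMu x a => tp M (upd_set r x (mu_sem M r psi)) a v
  | _ => []
  end.

Fixpoint fsize (psi : muform) : nat :=
  S (match psi with
     | MAnd a b | MOr a b => fsize a + fsize b
     | MDia a | MBox a | MNu _ a | MMu _ a => fsize a
     | _ => 0
     end).

Lemma tp_len : forall psi M r v, length (tp M r psi v) = fsize psi.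
Proof. induction psi; intros; simpl; try rewrite length_app; auto. Qed.

Definition matches (b : list bool) (L : list Prop) :=
  Forall2 (fun (bit : bool) (Q : Prop) => bit = true <-> Q) b L.

Lemma F2_split {A B} (R : A -> B -> Prop) : forall (l1 l2 : list B) (b : list A),
  Forall2 R b (l1 ++ l2) ->
  Forall2 R (firstn (length l1) b) l1 /\ Forall2 R (skipn (length l1) b) l2.
Proof.
  induction l1; intros l2 b H; simpl in *; auto.
  inversion H; subst. simpl. destruct (IHl1 _ _ H4). auto.
Qed.

Lemma matches_tyeq : forall psi M1 M2 s1 s2 v1 v2 b,
  matches b (tp M1 s1 psi v1) -> matches b (tp M2 s2 psi v2) -> tyeq M1 M2 s1 s2 psi v1 v2.
Proof.
  induction psi; intros M1 M2 s1 s2 v1 v2 b H1 H2; inversion H1; subst; inversion H2; subst;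
    simpl; (split; [tauto|]); auto.
  - match goal with H : Forall2 _ ?l (tp M1 _ _ _ ++ _), H' : Forall2 _ ?l (tp M2 _ _ _ ++ _) |- _ =>
      apply F2_split in H; apply F2_split in H'; rewrite !tp_len in H, H';
      split; [eapply IHpsi1; [apply H|apply H'] | eapply IHpsi2; [apply H|apply H']] end.
  - match goal with H : Forall2 _ ?l (tp M1 _ _ _ ++ _), H' : Forall2 _ ?l (tp M2 _ _ _ ++ _) |- _ =>
      apply F2_split in H; apply F2_split in H'; rewrite !tp_len in H, H';
      split; [eapply IHpsi1; [apply H|apply H'] | eapply IHpsi2; [apply H|apply H']] end.
  - match goal with H : Forall2 _ ?l (tp M1 _ _ _), H' : Forall2 _ ?l (tp M2 _ _ _) |- _ =>
      exact (IHpsi _ _ _ _ _ _ _ H H') end.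
  - match goal with H : Forall2 _ ?l (tp M1 _ _ _), H' : Forall2 _ ?l (tp M2 _ _ _) |- _ =>
      exact (IHpsi _ _ _ _ _ _ _ H H') end.
  - match goal with H : Forall2 _ ?l (tp M1 _ _ _), H' : Forall2 _ ?l (tp M2 _ _ _) |- _ =>
      exact (IHpsi _ _ _ _ _ _ _ H H') end.
  - match goal with H : Forall2 _ ?l (tp M1 _ _ _), H' : Forall2 _ ?l (tp M2 _ _ _) |- _ =>
      exact (IHpsi _ _ _ _ _ _ _ H H') end.
Qed.

Lemma tyeq_matches : forall psi M1 M2 s1 s2 v1 v2 b,
  tyeq M1 M2 s1 s2 psi v1 v2 -> matches b (tp M1 s1 psi v1) -> matches b (tp M2 s2 psi v2).
Proof.
  induction psi; intros M1 M2 s1 s2 v1 v2 b Ht H1; inversion H1; subst; simpl in Ht;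
    destruct Ht as [Hh Ht]; simpl; constructor; try tauto; auto.
  - apply F2_split in H4. rewrite tp_len in H4. destruct H4 as [Ha Hb].
    rewrite <- (firstn_skipn (fsize psi1) l). apply Forall2_app.
    + apply (IHpsi1 M1 M2 s1 s2 v1 v2); [apply Ht|exact Ha].
    + apply (IHpsi2 M1 M2 s1 s2 v1 v2); [apply Ht|exact Hb].
  - apply F2_split in H4. rewrite tp_len in H4. destruct H4 as [Ha Hb].
    rewrite <- (firstn_skipn (fsize psi1) l). apply Forall2_app.
    + apply (IHpsi1 M1 M2 s1 s2 v1 v2); [apply Ht|exact Ha].
    + apply (IHpsi2 M1 M2 s1 s2 v1 v2); [apply Ht|exact Hb].
  - eapply IHpsi; eauto.
  - eapply IHpsi; eauto.
  - eapply IHpsi; eauto.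
  - eapply IHpsi; eauto.
Qed.

Lemma matches_uniq : forall L b b', matches b L -> matches b' L -> b = b'.
Proof.
  induction L; intros b b' H H'; inversion H; inversion H'; subst; auto.
  f_equal; [|eauto]. destruct x, x0; auto; exfalso;
  match goal with H1: true = true <-> _, H2: false = true <-> _ |- _ =>
    assert (false = true) by (apply H2, H1; reflexivity); discriminate end.
Qed.

Lemma matches_ex : forall L, exists b, matches b L.
Proof.
  induction L as [|Q L IH]. exists []; constructor.
  destruct IH as [b Hb]. destruct (classic Q).
  - exists (true :: b); constructor; auto. tauto.
  - exists (false :: b); constructor; auto. split; intro; [discriminate|tauto].
Qed.

Lemma matches_len b L : matches b L -> length b = length L.
Proof. apply Forall2_length. Qed.

Lemma matches_map_iff {X} (f g : X -> Prop) : forall P b,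
  matches b (map f P) -> matches b (map g P) -> forall p, In p P -> (f p <-> g p).
Proof.
  induction P; intros b H1 H2 p Hp; simpl in *; [tauto|].
  inversion H1; subst; inversion H2; subst.
  destruct Hp as [<-|Hp]; [|eauto].
  match goal with H1: ?y = true <-> f a, H2 : ?y = true <-> g a |- _ =>
    rewrite <- H1, <- H2; tauto end.
Qed.

Definition r0 (M : model) : nat -> M -> Prop := fun _ _ => False.
Definition ty (phi : muform) (M : model) (z : M) := tp M (r0 M) phi z.
Definition Cl (M : model) (w v : M) := w = v \/ (rel M w v /\ rel M v w).
Definition cls := (list bool * bool)%type.
Definition cm (P : list nat) (M : model) (k : cls) (z : M) :=
  matches (fst k) (map (fun p => val M p z) P) /\ (snd k = true <-> rel M z z).
Definition E1 P (M : model) k (w : M) := exists v, Cl M w v /\ cm P M k v.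
Definition E2 P (M : model) k (w : M) :=
  exists v v', Cl M w v /\ Cl M w v' /\ ~ v = v' /\ cm P M k v /\ cm P M k v'.
Definition cnt_rel P (M : model) (c : nat) k (w : M) : Prop :=
  match c with 0 => ~ E1 P M k w | 1 => E1 P M k w /\ ~ E2 P M k w | 2 => E2 P M k w | _ => False end.

Fixpoint allbl (n : nat) : list (list bool) :=
  match n with 0 => [[]] | S n => map (cons true) (allbl n) ++ map (cons false) (allbl n) end.
Definition KK (P : list nat) : list cls := list_prod (allbl (length P)) [true; false].
Definition pm P (M : model) (pi : list nat) (w : M) :=
  Forall2 (fun c k => cnt_rel P M c k w) pi (KK P).
Definition Trep phi (M : model) (Th : list (list bool)) (z : M) :=
  (forall v, sprec M z v -> exists b, In b Th /\ matches b (ty phi M v)) /\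
  (forall b, In b Th -> exists v, sprec M z v /\ matches b (ty phi M v)).

Lemma allbl_in : forall n b, length b = n -> In b (allbl n).
Proof.
  induction n; intros b H; destruct b; simpl in *; try discriminate; auto.
  injection H as H. apply in_or_app. destruct b; [left|right]; apply in_map; auto.
Qed.

Lemma allbl_len : forall n b, In b (allbl n) -> length b = n.
Proof.
  induction n; intros b H; simpl in *. destruct H as [<-|[]]; auto.
  apply in_app_or in H. destruct H as [H|H]; apply in_map_iff in H; destruct H as [x [<- Hx]];
  simpl; f_equal; auto.
Qed.

Lemma allbl_nodup : forall n, NoDup (allbl n).
Proof.
  induction n; simpl. constructor; [intros []|constructor].
  apply NoDup_app.
  - apply NoDup_map_inv with (f := @tl bool). rewrite map_map. simpl. rewrite map_id. auto.
  - apply NoDup_map_inv with (f := @tl bool). rewrite map_map. simpl. rewrite map_id. auto.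
  - intros a H1 H2. apply in_map_iff in H1, H2. destruct H1 as [x [<- _]]. destruct H2 as [y [H _]].
    discriminate.
Qed.


Lemma cl_refl (M : model) (z : M) : Cl M z z.
Proof. left; auto. Qed.

Lemma cl_cone (M : model) : wK4 M -> forall z c v : M, Cl M z c -> rel M c v -> Cl M z v \/ sprec M z v.
Proof.
  intros W z c v Hc Hr.
  assert (Hzv : z = v \/ rel M z v).
  { destruct Hc as [<-|[H1 H2]]; auto. destruct (classic (z = v)); auto. right. eapply W; eauto. }
  destruct Hzv as [<-|Hzv]; [left; left; auto|].
  destruct (classic (rel M v z)); [left; right; auto|right; split; auto].
Qed.

Lemma cl_rel (M : model) : wK4 M -> forall z a b : M, Cl M z a -> Cl M z b -> a <> b -> rel M a b.
Proof.
  intros W z a b Ha Hb Hne.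
  destruct Ha as [<-|[Ha1 Ha2]].
  - destruct Hb as [<-|[Hb1 Hb2]]; [congruence|auto].
  - destruct Hb as [<-|[Hb1 Hb2]]; auto. eapply W; eauto.
Qed.

Lemma cl_A (M : model) : wK4 M -> forall z c v : M, Cl M z c -> sprec M z v -> rel M c v.
Proof.
  intros W z c v Hc [H1 H2]. destruct Hc as [<-|[Hc1 Hc2]]; auto.
  eapply W; eauto. intros ->. auto.
Qed.

Lemma A_upcl (M : model) : wK4 M -> forall z : M, upcl M (sprec M z).
Proof.
  intros W z u v [H1 H2] Hr. split.
  - eapply W; eauto. intros ->. auto.
  - intro Hv. apply H2. eapply W; eauto. intros ->. auto.
Qed.

Lemma A_trans (M : model) : wK4 M -> forall w z v : M, sprec M w z -> sprec M z v -> sprec M w v.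
Proof. intros W w z v H1 [H2 _]. eapply A_upcl; eauto. Qed.

Lemma cm_uniq P (M : model) k k' (v : M) : cm P M k v -> cm P M k' v -> k = k'.
Proof.
  unfold cm. destruct k as [b r], k' as [b' r']. intros [H1 H2] [H3 H4]; simpl in *.
  f_equal. eapply matches_uniq; eauto.
  destruct r, r'; auto; exfalso.
  - assert (false = true) by (apply H4, H2; auto); discriminate.
  - assert (false = true) by (apply H2, H4; auto); discriminate.
Qed.

Lemma class_ex P (M : model) (z : M) : exists k, In k (KK P) /\ cm P M k z.
Proof.
  destruct (matches_ex (map (fun p => val M p z) P)) as [b Hb].
  assert (Hl : length b = length P) by (rewrite (matches_len _ _ Hb), length_map; auto).
  destruct (classic (rel M z z)) as [Hr|Hr].
  - exists (b, true). split. apply in_prod; [apply allbl_in; auto|simpl; auto].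
    split; simpl; auto. tauto.
  - exists (b, false). split. apply in_prod; [apply allbl_in; auto|simpl; auto].
    split; simpl; auto. split; intro; [discriminate|tauto].
Qed.

Lemma F2_align {A B} (R1 R2 : A -> B -> Prop) : forall l1 l2, Forall2 R1 l1 l2 -> Forall2 R2 l1 l2 ->
  forall k, In k l2 -> exists c, R1 c k /\ R2 c k.
Proof.
  intros l1 l2 H1. induction H1; intros H2 k Hk; [destruct Hk|]; inversion H2; subst; destruct Hk as [<-|Hk]; eauto.
Qed.

Lemma E2_E1 P (M : model) k (w : M) : E2 P M k w -> E1 P M k w.
Proof. intros [v [v' (H1 & _ & _ & H4 & _)]]. exists v; auto. Qed.

Lemma prof_transfer P (M1 M2 : model) pi (z1 : M1) (z2 : M2) :
  pm P M1 pi z1 -> pm P M2 pi z2 -> forall k, In k (KK P) ->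
  (E1 P M1 k z1 -> E1 P M2 k z2) /\ (E2 P M1 k z1 -> E2 P M2 k z2).
Proof.
  intros H1 H2 k Hk. destruct (F2_align _ _ _ _ H1 H2 k Hk) as [c [Hc1 Hc2]].
  pose proof (E2_E1 P M1 k z1). pose proof (E2_E1 P M2 k z2).
  destruct c as [|[|[|c]]]; simpl in *; tauto.
Qed.

Definition ZZ P (M1 M2 : model) (z1 : M1) (z2 : M2) (c1 : M1) (c2 : M2) :=
  Cl M1 z1 c1 /\ Cl M2 z2 c2 /\ exists k, In k (KK P) /\ cm P M1 k c1 /\ cm P M2 k c2.

Lemma forth P (M1 M2 : model) pi (z1 : M1) (z2 : M2) : wK4 M1 -> wK4 M2 ->
  pm P M1 pi z1 -> pm P M2 pi z2 ->
  forall c1 c2 v1, ZZ P M1 M2 z1 z2 c1 c2 -> rel M1 c1 v1 ->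
  sprec M1 z1 v1 \/ exists v2, rel M2 c2 v2 /\ ZZ P M1 M2 z1 z2 v1 v2.
Proof.
  intros W1 W2 Hp1 Hp2 c1 c2 v1 (Hc1 & Hc2 & k & Hk & Hk1 & Hk2) Hr.
  destruct (cl_cone M1 W1 z1 c1 v1 Hc1 Hr) as [Hv|Hv]; [right|left; auto].
  destruct (class_ex P M1 v1) as [k'' [Hk'' Hcm'']].
  destruct (classic (v1 = c1)) as [->|Hne].
  - exists c2. split.
    + apply (proj2 Hk2). apply (proj2 Hk1). auto.
    + split; auto. split; auto. eauto.
  - destruct (classic (k'' = k)) as [->|Hkne].
    + destruct (prof_transfer P M1 M2 pi z1 z2 Hp1 Hp2 k Hk) as [_ HE2].
      assert (HE : E2 P M1 k z1).
      { exists c1, v1. split; [auto|split; [auto|split; [intro; subst; auto|split; auto]]]. }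
      destruct (HE2 HE) as [v [v' (Hv1 & Hv2 & Hvv & Hcv & Hcv')]].
      destruct (classic (v = c2)) as [->|Hvc].
      * exists v'. split; [apply (cl_rel M2 W2 z2); auto|]. split; auto. split; auto. eauto.
      * exists v. split; [apply (cl_rel M2 W2 z2); auto|]. split; auto. split; auto. eauto.
    + destruct (prof_transfer P M1 M2 pi z1 z2 Hp1 Hp2 k'' Hk'') as [HE1 _].
      assert (HE : E1 P M1 k'' z1) by (exists v1; auto).
      destruct (HE1 HE) as [v [Hv1 Hcv]].
      exists v. split.
      * apply (cl_rel M2 W2 z2); auto. intros ->. apply Hkne. eapply cm_uniq; eauto.
      * split; auto. split; auto. eauto.
Qed.

Lemma ZZ_sym P (M1 M2 : model) z1 z2 c1 c2 : ZZ P M1 M2 z1 z2 c1 c2 -> ZZ P M2 M1 z2 z1 c2 c1.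
Proof. intros (H1 & H2 & k & Hk & H3 & H4). split; auto. split; auto. eauto. Qed.

Lemma keyK phi (M1 M2 : model) : wK4 M1 -> wK4 M2 ->
  forall (z1 : M1) (z2 : M2) k pi Th b,
  cm (props phi) M1 k z1 -> cm (props phi) M2 k z2 ->
  pm (props phi) M1 pi z1 -> pm (props phi) M2 pi z2 ->
  Trep phi M1 Th z1 -> Trep phi M2 Th z2 ->
  matches b (ty phi M1 z1) -> matches b (ty phi M2 z2).
Proof.
  intros W1 W2 z1 z2 k pi Th b Hk1 Hk2 Hp1 Hp2 [T1 T1'] [T2 T2'] Hb.
  set (P := props phi) in *.
  assert (HB : relbis M1 M2 (ZZ P M1 M2 z1 z2) (sprec M1 z1) (sprec M2 z2) P).
  { split; [|split; [|split; [|split; [|split; [|split]]]]].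
    - intros c1 c2 (_ & _ & k' & _ & [Hm1 _] & [Hm2 _]) p Hp.
      exact (matches_map_iff (fun p => val M1 p c1) (fun p => val M2 p c2) P _ Hm1 Hm2 p Hp).
    - apply (forth P M1 M2 pi z1 z2 W1 W2 Hp1 Hp2).
    - intros c1 c2 v2 Hz Hr.
      destruct (forth P M2 M1 pi z2 z1 W2 W1 Hp2 Hp1 c2 c1 v2 (ZZ_sym _ _ _ _ _ _ _ Hz) Hr)
        as [H|[v1 [H1 H2]]]; auto.
      right. exists v1. split; auto. apply ZZ_sym; auto.
    - intros c1 c2 v1 (Hc & _) Ha. eapply cl_A; eauto.
    - intros c1 c2 v2 (_ & Hc & _) Ha. eapply cl_A; eauto.
    - apply A_upcl; auto.
    - apply A_upcl; auto. }
  assert (HT : TcondR M1 M2 (sprec M1 z1) (sprec M2 z2) (tyeq M1 M2 (r0 M1) (r0 M2) phi)).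
  { split.
    - intros v1 Hv1. destruct (T1 v1 Hv1) as [b' [Hb' Hm]]. destruct (T2' b' Hb') as [v2 [Hv2 Hm2]].
      exists v2. split; auto. eapply matches_tyeq; eauto.
    - intros v2 Hv2. destruct (T2 v2 Hv2) as [b' [Hb' Hm]]. destruct (T1' b' Hb') as [v1 [Hv1 Hm1]].
      exists v1. split; auto. eapply matches_tyeq; eauto. }
  assert (HZ : ZZ P M1 M2 z1 z2 z1 z2).
  { destruct (class_ex P M1 z1) as [k0 [Hk0 Hc0]].
    rewrite <- (cm_uniq _ _ _ _ _ Hk1 Hc0) in Hk0.
    split; [apply cl_refl|split; [apply cl_refl|eauto]]. }
  assert (Hty : tyeq M1 M2 (r0 M1) (r0 M2) phi z1 z2).
  { apply (Ltype M1 M2 _ _ _ P HB phi (incl_refl _) _ _ HT); auto.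
    intros x c1 c2 _. unfold r0. tauto. }
  eapply tyeq_matches; eauto.
Qed.

Fixpoint pw {A} (l : list A) : list (list A) :=
  match l with [] => [[]] | a :: l => map (cons a) (pw l) ++ pw l end.

Lemma pw_incl {A} : forall (l s : list A), In s (pw l) -> incl s l.
Proof.
  induction l; intros s H; simpl in *.
  - destruct H as [<-|[]]. intros x [].
  - apply in_app_or in H. destruct H as [H|H].
    + apply in_map_iff in H. destruct H as [t [<- Ht]]. intros x [<-|Hx]; simpl; auto.
      right. apply (IHl t); auto.
    + intros x Hx. right. apply (IHl s); auto.
Qed.

Lemma pw_nodup {A} : forall (l s : list A), NoDup l -> In s (pw l) -> NoDup s.
Proof.
  induction l; intros s Hn H; simpl in *.
  - destruct H as [<-|[]]. constructor.
  - inversion Hn as [|a0 l0 Hna Hnl]; subst. apply in_app_or in H. destruct H as [H|H]; auto.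
    apply in_map_iff in H. destruct H as [t [<- Ht]]. constructor; auto.
    intro Ha. apply Hna. apply (pw_incl l t); auto.
Qed.

Lemma pw_filter {A} (Pr : A -> Prop) : forall (l : list A),
  exists s, In s (pw l) /\ forall x, In x s <-> In x l /\ Pr x.
Proof.
  induction l as [|a l IH]; simpl.
  - exists []. split; auto. intros x; simpl; tauto.
  - destruct IH as [s [Hs Hx]]. destruct (classic (Pr a)) as [Ha|Ha].
    + exists (a :: s). split. apply in_or_app; left; apply in_map; auto.
      intros x. simpl. rewrite Hx. split; [intros [<-|H]; tauto|].
      intros [[<-|H] HP]; auto.
    + exists s. split. apply in_or_app; right; auto.
      intros x. rewrite Hx. split; [tauto|]. intros [[<-|H] HP]; tauto.
Qed.

Definition UU (phi : muform) := allbl (fsize phi).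

Lemma ty_in_U phi (M : model) (v : M) b : matches b (ty phi M v) -> In b (UU phi).
Proof.
  intro H. apply allbl_in. rewrite (matches_len _ _ H). unfold ty. apply tp_len.
Qed.

Lemma Trep_ex phi (M : model) (z : M) : exists Th, In Th (pw (UU phi)) /\ Trep phi M Th z.
Proof.
  destruct (pw_filter (fun b => exists v, sprec M z v /\ matches b (ty phi M v)) (UU phi))
    as [Th [HTh Hx]].
  exists Th. split; auto. split.
  - intros v Hv. destruct (matches_ex (ty phi M v)) as [b Hb]. exists b. split; auto.
    apply Hx. split; [eapply ty_in_U; eauto|eauto].
  - intros b Hb. apply Hx in Hb. tauto.
Qed.

Fixpoint alln3 (m : nat) : list (list nat) :=
  match m with
  | 0 => [[]]
  | S m => map (cons 0) (alln3 m) ++ map (cons 1) (alln3 m) ++ map (cons 2) (alln3 m)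
  end.

Lemma alln3_in : forall l, Forall (fun c => c <= 2) l -> In l (alln3 (length l)).
Proof.
  induction l; intros H; simpl; auto. inversion H; subst.
  destruct a as [|[|[|a]]]; try lia.
  - apply in_or_app; left; apply in_map; auto.
  - apply in_or_app; right; apply in_or_app; left; apply in_map; auto.
  - apply in_or_app; right; apply in_or_app; right; apply in_map; auto.
Qed.

Definition PI (P : list nat) := alln3 (length (KK P)).

Lemma prof_ex P (M : model) (z : M) : exists pi, In pi (PI P) /\ pm P M pi z.
Proof.
  assert (H : forall Ks, exists pi, Forall (fun c => c <= 2) pi /\
            Forall2 (fun c k => cnt_rel P M c k z) pi Ks).
  { induction Ks as [|k Ks IH]. exists []; split; constructor.
    destruct IH as [pi [H1 H2]].
    destruct (classic (E2 P M k z)) as [He2|He2].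
    - exists (2 :: pi). split; constructor; auto.
    - destruct (classic (E1 P M k z)) as [He1|He1].
      + exists (1 :: pi). split; constructor; auto; simpl; try lia; auto.
      + exists (0 :: pi). split; constructor; auto; simpl; try lia; auto. }
  destruct (H (KK P)) as [pi [H1 H2]]. exists pi. split; auto.
  unfold PI. rewrite <- (Forall2_length H2). apply alln3_in; auto.
Qed.

Lemma pf_ind (M : model) : path_finite M -> forall Q : M -> Prop,
  (forall z, (forall z', sprec M z z' -> Q z') -> Q z) -> forall z, Q z.
Proof.
  intros Hpf Q H z0. apply NNPP. intro Hz0.
  assert (Hstep : forall x : {z | ~ Q z}, exists y : {z | ~ Q z}, sprec M (proj1_sig x) (proj1_sig y)).
  { intros [x Hx]. simpl. apply NNPP. intro Hn. apply Hx. apply H. intros z' Hz'.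
    apply NNPP. intro Hq. apply Hn. exists (exist _ z' Hq). auto. }
  set (f := fun x => proj1_sig (constructive_indefinite_description _ (Hstep x))).
  assert (Hf : forall x, sprec M (proj1_sig x) (proj1_sig (f x))).
  { intro x. unfold f. destruct (constructive_indefinite_description _ (Hstep x)); auto. }
  apply Hpf. exists (fun n => proj1_sig (Nat.iter n f (exist _ z0 Hz0))).
  intro n. simpl. apply Hf.
Qed.

Lemma dl_ex phi : exists dl : cls -> list nat -> list (list bool) -> list bool,
  forall (M : model), wK4 M -> forall (z : M) k pi Th,
    cm (props phi) M k z -> pm (props phi) M pi z -> Trep phi M Th z ->
    matches (dl k pi Th) (ty phi M z).
Proof.
  assert (H : forall x : cls * list nat * list (list bool), exists b,
    forall (M : model), wK4 M -> forall (z : M),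
    cm (props phi) M (fst (fst x)) z -> pm (props phi) M (snd (fst x)) z -> Trep phi M (snd x) z ->
    matches b (ty phi M z)).
  { intros [[k pi] Th]. simpl.
    destruct (classic (exists (M : model) (z : M), wK4 M /\ cm (props phi) M k z /\
                pm (props phi) M pi z /\ Trep phi M Th z)) as [Hex|Hno].
    - destruct Hex as [M0 [z0 (W0 & H1 & H2 & H3)]].
      destruct (matches_ex (ty phi M0 z0)) as [b Hb]. exists b.
      intros M W z Hc Hp Ht. eapply (keyK phi M0 M W0 W z0 z k pi Th b); eauto.
    - exists []. intros M W z Hc Hp Ht. exfalso. apply Hno. exists M, z. auto. }
  exists (fun k pi Th => proj1_sig (constructive_indefinite_description _ (H (k, pi, Th)))).
  intros M W z k pi Th Hc Hp Ht.
  destruct (constructive_indefinite_description _ (H (k, pi, Th))) as [b Hb]. simpl.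
  apply Hb; auto.
Qed.

Definition FF := FNot FTrue.
Fixpoint bigor {A} (l : list A) (f : A -> foform) : foform :=
  match l with [] => FF | a :: l => FOr (f a) (bigor l f) end.
Fixpoint bigand {A} (l : list A) (f : A -> foform) : foform :=
  match l with [] => FTrue | a :: l => FAnd (f a) (bigand l f) end.

Lemma bigor_sem {A} (M : model) e (l : list A) f :
  fo_sat M e (bigor l f) <-> exists a, In a l /\ fo_sat M e (f a).
Proof.
  induction l; simpl. split; [tauto|intros [a [[] _]]].
  rewrite IHl. split.
  - intros [H|[b [Hb H]]]; eauto.
  - intros [b [[<-|Hb] H]]; eauto.
Qed.

Lemma bigand_sem {A} (M : model) e (l : list A) f :
  fo_sat M e (bigand l f) <-> forall a, In a l -> fo_sat M e (f a).
Proof.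
  induction l; simpl. split; [intros _ a []|auto].
  rewrite IHl. split.
  - intros [H1 H2] b [<-|Hb]; auto.
  - intros H; split; auto.
Qed.

Lemma bigor_free {A} i (l : list A) f : fo_free i (bigor l f) -> exists a, In a l /\ fo_free i (f a).
Proof. induction l; simpl. tauto. intros [H|H]; [eauto|destruct (IHl H) as [b [? ?]]; eauto]. Qed.

Lemma bigand_free {A} i (l : list A) f : fo_free i (bigand l f) -> exists a, In a l /\ fo_free i (f a).
Proof. induction l; simpl. tauto. intros [H|H]; [eauto|destruct (IHl H) as [b [? ?]]; eauto]. Qed.

Lemma ue_eq {W} (e : nat -> W) i w : upd_env e i w i = w.
Proof. unfold upd_env. now rewrite Nat.eqb_refl. Qed.
Lemma ue_neq {W} (e : nat -> W) i w j : j <> i -> upd_env e i w j = e j.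
Proof. intro H. unfold upd_env. apply Nat.eqb_neq in H. now rewrite H. Qed.

Fixpoint fbits (bits : list bool) (P : list nat) (y : nat) : foform :=
  match bits, P with
  | b :: bs, p :: ps => FAnd (if b then FPred p y else FNot (FPred p y)) (fbits bs ps y)
  | [], [] => FTrue
  | _, _ => FF
  end.

Lemma fbits_sem (M : model) e : forall bits P y,
  fo_sat M e (fbits bits P y) <-> matches bits (map (fun p => val M p (e y)) P).
Proof.
  induction bits as [|b bs IH]; intros [|p ps] y; simpl.
  - split; constructor.
  - split; [tauto|intro H; inversion H].
  - split; [tauto|intro H; inversion H].
  - rewrite IH. split.
    + intros [H1 H2]. constructor; auto. destruct b; simpl in H1; split; intro; auto; try discriminate; try contradiction.
    + intro H. inversion H; subst. split; auto. destruct b; simpl in *; [tauto|].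
      intro Hv. assert (false = true) by tauto. discriminate.
Qed.

Lemma fbits_free i : forall bits P y, fo_free i (fbits bits P y) -> i = y.
Proof.
  induction bits as [|b bs IH]; intros [|p ps] y; simpl; try tauto.
  intros [H|H]; [destruct b; simpl in H; auto|eauto].
Qed.

Definition fcls (P : list nat) (k : cls) (y : nat) : foform :=
  FAnd (fbits (fst k) P y) (if snd k then FRel y y else FNot (FRel y y)).

Lemma fcls_sem (M : model) e P k y : fo_sat M e (fcls P k y) <-> cm P M k (e y).
Proof.
  unfold fcls, cm. simpl. rewrite fbits_sem. destruct (snd k); simpl.
  - split; intros [H1 H2]; split; auto; tauto.
  - split; intros [H1 H2]; split; auto.
    + split; intro; [discriminate|contradiction].
    + intro Hr. assert (false = true) by tauto. discriminate.
Qed.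

Lemma fcls_free i P k y : fo_free i (fcls P k y) -> i = y.
Proof. unfold fcls. simpl. intros [H|H]; [eapply fbits_free; eauto|destruct (snd k); simpl in H; lia]. Qed.

Definition fInC (y z : nat) : foform := FOr (FEq y z) (FAnd (FRel y z) (FRel z y)).
Lemma fInC_sem (M : model) e y z : fo_sat M e (fInC y z) <-> Cl M (e y) (e z).
Proof. unfold fInC, Cl. simpl. tauto. Qed.
Lemma fInC_free i y z : fo_free i (fInC y z) -> i = y \/ i = z.
Proof. unfold fInC; simpl. intuition. Qed.

Definition fE1 P k y := FEx (S y) (FAnd (fInC y (S y)) (fcls P k (S y))).
Definition fE2 P k y := FEx (S y) (FEx (S (S y)) (FAnd (fInC y (S y)) (FAnd (fInC y (S (S y)))
   (FAnd (FNot (FEq (S y) (S (S y)))) (FAnd (fcls P k (S y)) (fcls P k (S (S y)))))))).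

Lemma fE1_sem (M : model) e P k y : fo_sat M e (fE1 P k y) <-> E1 P M k (e y).
Proof.
  unfold fE1, E1. cbn [fo_sat]. split; intros [v H]; exists v.
  - rewrite fInC_sem, fcls_sem in H. rewrite ue_eq, ue_neq in H by lia. auto.
  - rewrite fInC_sem, fcls_sem. rewrite ue_eq, ue_neq by lia. auto.
Qed.

Lemma fE2_sem (M : model) e P k y : fo_sat M e (fE2 P k y) <-> E2 P M k (e y).
Proof.
  unfold fE2, E2. cbn [fo_sat]. setoid_rewrite fInC_sem. setoid_rewrite fcls_sem.
  split; intros [v [v' H]]; exists v, v'.
  - rewrite !ue_eq, !(ue_neq _ (S (S y))), !ue_neq, ue_eq in H by lia. tauto.
  - rewrite !ue_eq, !(ue_neq _ (S (S y))), !ue_neq, ue_eq by lia. tauto.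
Qed.

Definition fcnt P (c : nat) k y : foform :=
  match c with 0 => FNot (fE1 P k y) | 1 => FAnd (fE1 P k y) (FNot (fE2 P k y))
  | 2 => fE2 P k y | _ => FF end.

Lemma fcnt_sem (M : model) e P c k y : fo_sat M e (fcnt P c k y) <-> cnt_rel P M c k (e y).
Proof.
  destruct c as [|[|[|c]]]; cbn [fcnt fo_sat]; rewrite ?fE1_sem, ?fE2_sem; simpl; tauto.
Qed.

Fixpoint fprof P (pi : list nat) (Ks : list cls) (y : nat) : foform :=
  match pi, Ks with
  | c :: cs, k :: ks => FAnd (fcnt P c k y) (fprof P cs ks y)
  | [], [] => FTrue
  | _, _ => FF
  end.

Lemma fprof_sem (M : model) e P : forall pi Ks y,
  fo_sat M e (fprof P pi Ks y) <-> Forall2 (fun c k => cnt_rel P M c k (e y)) pi Ks.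
Proof.
  induction pi as [|c cs IH]; intros [|k ks] y; simpl.
  - split; constructor.
  - split; [tauto|intro H; inversion H].
  - split; [tauto|intro H; inversion H].
  - cbn [fo_sat]. rewrite IH, fcnt_sem. split; [intros [? ?]; constructor; auto|intro H; inversion H; auto].
Qed.

Lemma fE_free i P k y : (fo_free i (fE1 P k y) -> i = y) /\ (fo_free i (fE2 P k y) -> i = y).
Proof.
  unfold fE1, fE2. cbn [fo_free]. split.
  - intros [H1 [H|H]]; [apply fInC_free in H|apply fcls_free in H]; lia.
  - intros [H1 [H2 H]].
    repeat match goal with H : _ \/ _ |- _ => destruct H end;
    repeat match goal with
    | H : fo_free _ (fInC _ _) |- _ => apply fInC_free in H
    | H : fo_free _ (fcls _ _ _) |- _ => apply fcls_free in H
    end; lia.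
Qed.

Lemma fprof_free i P : forall pi Ks y, fo_free i (fprof P pi Ks y) -> i = y.
Proof.
  induction pi as [|c cs IH]; intros [|k ks] y; cbn [fprof fo_free]; unfold FF; cbn [fo_free]; try tauto.
  intros [H|H]; [|eauto].
  destruct (fE_free i P k y) as [F1 F2].
  destruct c as [|[|[|c]]]; cbn [fcnt fo_free] in H; unfold FF in H; cbn [fo_free] in H; intuition.
Qed.

Definition fA (y z : nat) := FAnd (FRel y z) (FNot (FRel z y)).
Lemma fA_sem (M : model) e y z : fo_sat M e (fA y z) <-> sprec M (e y) (e z).
Proof. unfold fA, sprec. simpl. tauto. Qed.
Lemma fA_free i y z : fo_free i (fA y z) -> i = y \/ i = z.
Proof. unfold fA; simpl. intuition. Qed.

Fixpoint eqlb (a b : list bool) : bool :=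
  match a, b with
  | [], [] => true
  | x :: a, y :: b => Bool.eqb x y && eqlb a b
  | _, _ => false
  end.

Lemma eqlb_iff : forall a b, eqlb a b = true <-> a = b.
Proof.
  induction a as [|x a IH]; intros [|y b]; simpl; split; intro H; try discriminate; auto.
  - apply andb_true_iff in H. destruct H as [H1 H2]. apply Bool.eqb_prop in H1. apply IH in H2. subst; auto.
  - injection H as -> ->. apply andb_true_iff. split; [apply Bool.eqb_reflx|apply IH; auto].
Qed.

Definition memb (b : list bool) (Th : list (list bool)) := existsb (eqlb b) Th.
Lemma memb_iff b Th : memb b Th = true <-> In b Th.
Proof.
  unfold memb. rewrite existsb_exists. split.
  - intros [x [Hx He]]. apply eqlb_iff in He. subst; auto.
  - intro H. exists b. split; auto. apply eqlb_iff; auto.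
Qed.

Definition inclb (A B : list (list bool)) := forallb (fun b => memb b B) A.
Lemma inclb_iff A B : inclb A B = true <-> incl A B.
Proof.
  unfold inclb. rewrite forallb_forall. split.
  - intros H x Hx. apply memb_iff; auto.
  - intros H x Hx. apply memb_iff; auto.
Qed.

Definition strictb A B := inclb A B && negb (inclb B A).
Lemma strictb_iff A B : strictb A B = true <-> incl A B /\ ~ incl B A.
Proof.
  unfold strictb. rewrite andb_true_iff, negb_true_iff, inclb_iff, <- inclb_iff.
  split; intros [H1 H2]; split; auto.
  - intro H. apply inclb_iff in H. congruence.
  - destruct (inclb B A) eqn:E; auto. exfalso; apply H2, inclb_iff; auto.
Qed.

Definition fcond phi (rec : list (list bool) -> nat -> foform) Th Th' z :=
  if inclb Th Th' then
    bigand (pw (UU phi)) (fun Th'' => if strictb Th'' Th then FNot (rec Th'' z) else FTrue)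
  else rec Th' z.

Definition floc phi rec Th (sel : cls -> list nat -> list (list bool) -> bool) z :=
  bigor (pw (UU phi)) (fun Th' => if inclb Th' Th then
    bigor (KK (props phi)) (fun k => bigor (PI (props phi)) (fun pi =>
      if sel k pi Th' then
        FAnd (fcls (props phi) k z) (FAnd (fprof (props phi) pi (KK (props phi)) z) (fcond phi rec Th Th' z))
      else FF))
    else FF).

Definition fbody phi (dl : cls -> list nat -> list (list bool) -> list bool) rec Th y :=
  FAnd (FAll (S y) (FImp (fA y (S y))
          (floc phi rec Th (fun k pi Th' => memb (dl k pi Th') Th) (S y))))
       (bigand Th (fun b => FEx (S y) (FAnd (fA y (S y))
          (floc phi rec Th (fun k pi Th' => eqlb (dl k pi Th') b) (S y))))).

Fixpoint fHas phi dl (f : nat) (Th : list (list bool)) (y : nat) : foform :=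
  match f with 0 => FF | S f' => fbody phi dl (fHas phi dl f') Th y end.

Lemma Trep_incl phi (M : model) A B (u : M) : Trep phi M A u -> Trep phi M B u -> incl A B.
Proof.
  intros [HA1 HA2] [HB1 HB2] b Hb. destruct (HA2 b Hb) as [v [Hv Hm]].
  destruct (HB1 v Hv) as [b' [Hb' Hm']]. rewrite (matches_uniq _ _ _ Hm Hm'). auto.
Qed.

Lemma Trep_seteq phi (M : model) A B (u : M) : incl A B -> incl B A -> Trep phi M A u -> Trep phi M B u.
Proof.
  intros H1 H2 [HA1 HA2]. split.
  - intros v Hv. destruct (HA1 v Hv) as [b [Hb Hm]]. eauto.
  - intros b Hb. apply HA2. auto.
Qed.

Definition Tsub phi (M : model) Th (u : M) :=
  forall v, sprec M u v -> exists b, In b Th /\ matches b (ty phi M v).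

Lemma cond_correct phi (M : model) rec Th Th' e z :
  (forall Th'', In Th'' (pw (UU phi)) -> incl Th'' Th -> ~ incl Th Th'' ->
     forall e z, fo_sat M e (rec Th'' z) <-> Trep phi M Th'' (e z)) ->
  In Th' (pw (UU phi)) -> incl Th' Th -> Tsub phi M Th (e z) ->
  (fo_sat M e (fcond phi rec Th Th' z) <-> Trep phi M Th' (e z)).
Proof.
  intros Hrec HTh' Hinc Hsub. unfold fcond.
  destruct (inclb Th Th') eqn:E.
  - apply inclb_iff in E. rewrite bigand_sem. split.
    + intro H. destruct (Trep_ex phi M (e z)) as [Tr [HTr HTrep]].
      assert (Hr1 : incl Tr Th).
      { intros b Hb. destruct (proj2 HTrep b Hb) as [v [Hv Hm]].
        destruct (Hsub v Hv) as [b' [Hb' Hm']]. rewrite (matches_uniq _ _ _ Hm Hm'); auto. }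
      assert (Hr2 : incl Th Tr).
      { apply NNPP. intro Hn. specialize (H Tr HTr).
        assert (Hs : strictb Tr Th = true) by (apply strictb_iff; auto).
        rewrite Hs in H. cbn [fo_sat] in H. apply H. apply Hrec; auto. }
      eapply Trep_seteq; [| |exact HTrep]; eapply incl_tran; eauto.
    + intros Ht Th'' HTh''. destruct (strictb Th'' Th) eqn:Es; cbn [fo_sat]; auto.
      apply strictb_iff in Es. destruct Es as [Es1 Es2].
      rewrite Hrec; auto. intro Ht''. apply Es2.
      eapply incl_tran; [exact E|]. eapply Trep_incl; eauto.
  - apply Hrec; auto. intro H. apply inclb_iff in H. congruence.
Qed.

Lemma floc_sem phi (M : model) rec Th sel e z :
  fo_sat M e (floc phi rec Th sel z) <->
  exists Th' k pi, In Th' (pw (UU phi)) /\ incl Th' Th /\ In k (KK (props phi)) /\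
    In pi (PI (props phi)) /\ sel k pi Th' = true /\ cm (props phi) M k (e z) /\
    pm (props phi) M pi (e z) /\ fo_sat M e (fcond phi rec Th Th' z).
Proof.
  unfold floc. rewrite bigor_sem. split.
  - intros [Th' [HTh' H]]. destruct (inclb Th' Th) eqn:E; [|unfold FF in H; cbn [fo_sat] in H; tauto].
    apply inclb_iff in E. rewrite bigor_sem in H. destruct H as [k [Hk H]].
    rewrite bigor_sem in H. destruct H as [pi [Hpi H]].
    destruct (sel k pi Th') eqn:Es; [|unfold FF in H; cbn [fo_sat] in H; tauto].
    cbn [fo_sat] in H. rewrite fcls_sem, fprof_sem in H.
    exists Th', k, pi. tauto.
  - intros [Th' [k [pi (H1 & H2 & H3 & H4 & H5 & H6 & H7 & H8)]]].
    exists Th'. split; auto. apply inclb_iff in H2. rewrite H2.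
    rewrite bigor_sem. exists k. split; auto. rewrite bigor_sem. exists pi. split; auto.
    rewrite H5. cbn [fo_sat]. rewrite fcls_sem, fprof_sem. tauto.
Qed.

Lemma fbody_sem phi dl (M : model) : wK4 M -> path_finite M ->
  (forall (z : M) k pi Th, cm (props phi) M k z -> pm (props phi) M pi z -> Trep phi M Th z ->
     matches (dl k pi Th) (ty phi M z)) ->
  forall Th rec,
  (forall Th'', In Th'' (pw (UU phi)) -> incl Th'' Th -> ~ incl Th Th'' ->
     forall e z, fo_sat M e (rec Th'' z) <-> Trep phi M Th'' (e z)) ->
  forall e y, fo_sat M e (fbody phi dl rec Th y) <-> Trep phi M Th (e y).
Proof.
  intros W Hpf Hdl Th rec Hrec e y.
  unfold fbody. cbn [fo_sat]. rewrite bigand_sem.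
  assert (Hcc : forall v Th', In Th' (pw (UU phi)) -> incl Th' Th -> Tsub phi M Th v ->
            (fo_sat M (upd_env e (S y) v) (fcond phi rec Th Th' (S y)) <-> Trep phi M Th' v)).
  { intros v Th' H1 H2 H3. rewrite (cond_correct phi M rec Th Th' _ (S y) Hrec H1 H2); rewrite ue_eq; auto; tauto. }
  split.
  - intros [H1 H2].
    assert (Q : forall v, sprec M (e y) v -> Tsub phi M Th v /\ exists b, In b Th /\ matches b (ty phi M v)).
    { apply (pf_ind M Hpf (fun v => sprec M (e y) v -> Tsub phi M Th v /\ exists b, In b Th /\ matches b (ty phi M v))).
      intros v IH Hv.
      assert (Hs : Tsub phi M Th v).
      { intros v' Hv'. apply (IH v' Hv'). eapply A_trans; eauto. }
      split; auto.
      specialize (H1 v). cbn [fo_sat] in H1. rewrite fA_sem, ue_eq, ue_neq in H1 by lia.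
      specialize (H1 Hv). rewrite floc_sem, ue_eq in H1.
      destruct H1 as [Th' [k [pi (Ha & Hb & Hc & Hd & He & Hf & Hg & Hh)]]].
      rewrite Hcc in Hh; auto.
      exists (dl k pi Th'). split; [apply memb_iff; auto|]. apply Hdl; auto. }
    split.
    + intros v Hv. apply (Q v Hv).
    + intros b Hb. specialize (H2 b Hb). cbn [fo_sat] in H2. destruct H2 as [v H2].
      cbn [fo_sat] in H2. rewrite fA_sem, ue_eq, ue_neq in H2 by lia. destruct H2 as [Hv H2].
      rewrite floc_sem, ue_eq in H2.
      destruct H2 as [Th' [k [pi (Ha & Hb' & Hc & Hd & He & Hf & Hg & Hh)]]].
      rewrite Hcc in Hh; auto; [|apply (Q v Hv)].
      exists v. split; auto. apply eqlb_iff in He. rewrite <- He. apply Hdl; auto.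
  - intros HT.
    assert (Hsub : forall v, sprec M (e y) v -> Tsub phi M Th v).
    { intros v Hv v' Hv'. apply (proj1 HT). eapply A_trans; eauto. }
    assert (Hloc : forall v, sprec M (e y) v -> exists Th' k pi, In Th' (pw (UU phi)) /\ incl Th' Th /\
              In k (KK (props phi)) /\ In pi (PI (props phi)) /\ cm (props phi) M k v /\
              pm (props phi) M pi v /\ Trep phi M Th' v /\ matches (dl k pi Th') (ty phi M v)).
    { intros v Hv. destruct (Trep_ex phi M v) as [Tr [HTr HTrep]].
      destruct (class_ex (props phi) M v) as [k [Hk Hck]].
      destruct (prof_ex (props phi) M v) as [pi [Hpi Hpm]].
      exists Tr, k, pi. refine (conj HTr (conj _ (conj Hk (conj Hpi (conj Hck (conj Hpm (conj HTrep _))))))).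
      - intros b Hb. destruct (proj2 HTrep b Hb) as [v' [Hv' Hm]].
        destruct (Hsub v Hv v' Hv') as [b' [Hb' Hm']]. rewrite (matches_uniq _ _ _ Hm Hm'); auto.
      - apply Hdl; auto. }
    split.
    + intros v. cbn [fo_sat]. rewrite fA_sem, ue_eq, ue_neq by lia. intro Hv.
      rewrite floc_sem, ue_eq.
      destruct (Hloc v Hv) as [Th' [k [pi (Ha & Hb & Hc & Hd & He & Hf & Hg & Hh)]]].
      exists Th', k, pi. refine (conj Ha (conj Hb (conj Hc (conj Hd (conj _ (conj He (conj Hf _))))))).
      * apply memb_iff. destruct (proj1 HT v Hv) as [b [Hb' Hm]].
        rewrite (matches_uniq _ _ _ Hh Hm). auto.
      * apply Hcc; auto.
    + intros b Hb. cbn [fo_sat]. destruct (proj2 HT b Hb) as [v [Hv Hm]].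
      exists v. cbn [fo_sat]. rewrite fA_sem, ue_eq, ue_neq by lia. split; auto.
      rewrite floc_sem, ue_eq.
      destruct (Hloc v Hv) as [Th' [k [pi (Ha & Hb' & Hc & Hd & He & Hf & Hg & Hh)]]].
      exists Th', k, pi. refine (conj Ha (conj Hb' (conj Hc (conj Hd (conj _ (conj He (conj Hf _))))))).
      * apply eqlb_iff. apply (matches_uniq _ _ _ Hh Hm).
      * apply Hcc; auto.
Qed.

Lemma strict_len {A} (l1 l2 : list A) : NoDup l1 -> NoDup l2 -> incl l1 l2 -> ~ incl l2 l1 ->
  length l1 < length l2.
Proof.
  intros N1 N2 H1 H2. pose proof (NoDup_incl_length N1 H1).
  destruct (Nat.eq_dec (length l1) (length l2)); [|lia].
  exfalso. apply H2. apply NoDup_length_incl; auto. lia.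
Qed.

Lemma fHas_sem phi dl (M : model) : wK4 M -> path_finite M ->
  (forall (z : M) k pi Th, cm (props phi) M k z -> pm (props phi) M pi z -> Trep phi M Th z ->
     matches (dl k pi Th) (ty phi M z)) ->
  forall f Th, In Th (pw (UU phi)) -> length Th < f ->
  forall e y, fo_sat M e (fHas phi dl f Th y) <-> Trep phi M Th (e y).
Proof.
  intros W Hpf Hdl f. induction f as [|f IH]; intros Th HTh Hl e y; [lia|].
  cbn [fHas]. apply fbody_sem; auto.
  intros Th'' H1 H2 H3 e' z. apply IH; auto.
  pose proof (allbl_nodup (fsize phi)) as ND.
  assert (length Th'' < length Th).
  { apply strict_len; auto; eapply pw_nodup; eauto. }
  lia.
Qed.

Lemma fHas_free phi dl : forall f Th y i, fo_free i (fHas phi dl f Th y) -> i = y.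
Proof.
  induction f; intros Th y i H; cbn [fHas] in H; [unfold FF in H; cbn [fo_free] in H; tauto|].
  unfold fbody in H. cbn [fo_free] in H.
  assert (Hloc : forall sel z, fo_free i (floc phi (fHas phi dl f) Th sel z) -> i = z).
  { intros sel z Hz. unfold floc in Hz. apply bigor_free in Hz. destruct Hz as [Th' [_ Hz]].
    destruct (inclb Th' Th); [|unfold FF in Hz; cbn [fo_free] in Hz; tauto].
    apply bigor_free in Hz. destruct Hz as [k [_ Hz]].
    apply bigor_free in Hz. destruct Hz as [pi [_ Hz]].
    destruct (sel k pi Th'); [|unfold FF in Hz; cbn [fo_free] in Hz; tauto].
    cbn [fo_free] in Hz. destruct Hz as [Hz|[Hz|Hz]].
    - eapply fcls_free; eauto.
    - eapply fprof_free; eauto.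
    - unfold fcond in Hz. destruct (inclb Th Th'); [|eauto].
      apply bigand_free in Hz. destruct Hz as [Th'' [_ Hz]].
      destruct (strictb Th'' Th); cbn [fo_free] in Hz; [eauto|tauto]. }
  destruct H as [[H0 [H|H]]|H].
  - apply fA_free in H. lia.
  - apply Hloc in H. lia.
  - apply bigand_free in H. destruct H as [b [_ H]]. cbn [fo_free] in H.
    destruct H as [H0 [H|H]]; [apply fA_free in H; lia|apply Hloc in H; lia].
Qed.

Lemma hd_match phi (M : model) (w : M) b : matches b (ty phi M w) ->
  (hd false b = true <-> truth_set M phi w).
Proof.
  intro H. unfold ty in H. destruct phi; simpl in H; inversion H as [|x y l l' Hx Hl]; subst; simpl; exact Hx.
Qed.

Theorem mainTheorem3 :
  forall phi : muform, mu_closed phi ->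
  exists theta : foform,
    fo_in_one_var 0 theta /\
    bisim_invariant_on pf_wK4 theta 0 /\
    forall M : model, path_finite M -> wK4 M ->
      forall w : M, truth_set M phi w <-> fo_holds_at M theta 0 w.
Proof.
  intros phi _.
  destruct (dl_ex phi) as [dl Hdl].
  set (P := props phi).
  set (theta := bigor (pw (UU phi)) (fun Th => bigor (KK P) (fun k => bigor (PI P) (fun pi =>
      if hd false (dl k pi Th) then
        FAnd (fcls P k 0) (FAnd (fprof P pi (KK P) 0) (fHas phi dl (S (length (UU phi))) Th 0))
      else FF)))).
  assert (Hsem : forall M : model, path_finite M -> wK4 M ->
      forall w : M, truth_set M phi w <-> fo_holds_at M theta 0 w).
  { intros M Hpf W w. unfold fo_holds_at, theta.
    assert (HH : forall Th, In Th (pw (UU phi)) -> forall e y,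
       fo_sat M e (fHas phi dl (S (length (UU phi))) Th y) <-> Trep phi M Th (e y)).
    { intros Th HTh e y. apply fHas_sem; auto.
      pose proof (NoDup_incl_length (pw_nodup _ _ (allbl_nodup (fsize phi)) HTh) (pw_incl _ _ HTh)).
        unfold UU in *. lia. }
    rewrite bigor_sem. split.
    - intro Ht. destruct (Trep_ex phi M w) as [Tr [HTr HTrep]].
      destruct (class_ex P M w) as [k [Hk Hck]].
      destruct (prof_ex P M w) as [pi [Hpi Hpm]].
      pose proof (Hdl M W w k pi Tr Hck Hpm HTrep) as Hm.
      exists Tr. split; auto. rewrite bigor_sem. exists k. split; auto.
      rewrite bigor_sem. exists pi. split; auto.
      assert (Hhd : hd false (dl k pi Tr) = true) by (apply (hd_match phi M w); auto).
      rewrite Hhd. cbn [fo_sat]. rewrite fcls_sem, fprof_sem, HH; auto.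
    - intros [Th [HTh H]]. rewrite bigor_sem in H. destruct H as [k [Hk H]].
      rewrite bigor_sem in H. destruct H as [pi [Hpi H]].
      destruct (hd false (dl k pi Th)) eqn:Ehd; [|unfold FF in H; cbn [fo_sat] in H; tauto].
      cbn [fo_sat] in H. rewrite fcls_sem, fprof_sem, HH in H by auto.
      destruct H as (H1 & H2 & H3).
      apply (hd_match phi M w (dl k pi Th)); auto. }
  exists theta. split; [|split].
  - intros i Hi. unfold theta in Hi.
    apply bigor_free in Hi. destruct Hi as [Th [_ Hi]].
    apply bigor_free in Hi. destruct Hi as [k [_ Hi]].
    apply bigor_free in Hi. destruct Hi as [pi [_ Hi]].
    destruct (hd false (dl k pi Th)); [|unfold FF in Hi; cbn [fo_free] in Hi; tauto].
    cbn [fo_free] in Hi. destruct Hi as [Hi|[Hi|Hi]].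
    + eapply fcls_free; eauto.
    + eapply fprof_free; eauto.
    + eapply fHas_free; eauto.
  - intros M N Z [HpM HwM] [HpN HwN] HB u v Huv.
    rewrite <- (Hsem M HpM HwM u), <- (Hsem N HpN HwN v).
    apply (mu_bisim_inv phi M N Z HB u v Huv).
  - exact Hsem.
Qed.
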